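(* Let $\mathcal{H}_k$ be a truncated space with orthonormal basis $f_m(z)=(1+b_mz)z^m$, $m\ge0$, where $b_t=0$ for all $t\ge n$; let $U:\mathcal{H}_k\to H^2(\mathbb{D})$ be the unitary with $Uf_m=z^m$, and let $S_n=UM_zU^*$ be the corresponding $n$-shift on $H^2(\mathbb{D})$. Then every closed subspace $\mathcal{M}\subseteq H^2(\mathbb{D})$ invariant under $S_n$ is hyperinvariant for $S_n$, i.e. $X\mathcal{M}\subseteq\mathcal{M}$ for every bounded operator $X$ on $H^2(\mathbb{D})$ with $XS_n=S_nX$.
   Context: Fix $n \ge 1$. $H^2(\mathbb{D})$ is the Hardy space on the open unit disc. A truncated space is a reproducing kernel Hilbert space $\mathcal{H}_k$ of analytic functions on $\mathbb{D}$ (with scalar analytic kernel $k$) such that: $\mathbb{C}[z]\subseteq\mathcal{H}_k$; the multiplication operator $M_z$ is bounded on $\mathcal{H}_k$; and the functions $f_m(z) = (1 + b_m z)z^m$, $m \ge 0$, form an orthonormal basis of $\mathcal{H}_k$, for scalars $\{b_m\}$ with $b_t = 0$ for $t \ge n$. *)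

(* Defs.v *)
From Stdlib Require Import Reals.
From Coquelicot Require Import Coquelicot.
Open Scope R_scope.

(* Elements of H^2(D) are identified with their Taylor coefficient sequences,
   i.e. H^2(D) = l^2(N) via g = sum_m a_m z^m. *)
Definition seqC := nat -> C.

Definition in_l2 (a : seqC) : Prop := ex_series (fun m => (Cmod (a m))^2).

Definition sq_norm (a : seqC) : R := Series (fun m => (Cmod (a m))^2).

Definition sub_seq (a c : seqC) : seqC := fun m => Cminus (a m) (c m).
Definition add_seq (a c : seqC) : seqC := fun m => Cplus (a m) (c m).
Definition scal_seq (l : C) (a : seqC) : seqC := fun m => Cmult l (a m).
Definition zero_seq : seqC := fun _ => RtoC 0.

Definition fbasis (b : nat -> C) (m : nat) (z : C) : C :=
  Cmult (Cplus (RtoC 1) (Cmult (b m) z)) (Cpow z m).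

(* [represents b a z w]: the function U^* a = sum_m a_m f_m of H_k takes the
   value w at the point z. *)
Definition represents (b : nat -> C) (a : seqC) (z w : C) : Prop :=
  is_series (fun m => Cmult (a m) (fbasis b m z)) w.

(* S is the n-shift S_n = U M_z U^* on H^2(D) = l^2 : for every a in l^2,
   S a is in l^2 and the function sum_m (S a)_m f_m equals z * sum_m a_m f_m
   on the disc, i.e. U^*(S a) = M_z (U^* a). *)
Definition is_n_shift (b : nat -> C) (S : seqC -> seqC) : Prop :=
  forall a, in_l2 a ->
    in_l2 (S a) /\
    forall z w, Cmod z < 1 -> represents b a z w ->
      represents b (S a) z (Cmult z w).

Definition closed_subspace (M : seqC -> Prop) : Prop :=
  (forall a, M a -> in_l2 a) /\
  M zero_seq /\
  (forall a c, M a -> M c -> M (add_seq a c)) /\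
  (forall l a, M a -> M (scal_seq l a)) /\
  (forall (u : nat -> seqC) a, (forall k, M (u k)) -> in_l2 a ->
     is_lim_seq (fun k => sq_norm (sub_seq (u k) a)) 0 -> M a).

Definition bounded_operator (X : seqC -> seqC) : Prop :=
  (forall a, in_l2 a -> in_l2 (X a)) /\
  (forall a c, in_l2 a -> in_l2 c -> X (add_seq a c) = add_seq (X a) (X c)) /\
  (forall l a, in_l2 a -> X (scal_seq l a) = scal_seq l (X a)) /\
  (exists K, forall a, in_l2 a -> sq_norm (X a) <= K * sq_norm a).

Definition invariant (T : seqC -> seqC) (M : seqC -> Prop) : Prop :=
  forall a, M a -> M (T a).

(* Main.v *)
Require Import Defs.
From Stdlib Require Import Reals.
From Coquelicot Require Import Coquelicot.
From Stdlib Require Import Lra Lia Psatz FunctionalExtensionality Arith.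
Open Scope R_scope.

Definition nsq (x : C) : R := (fst x)^2 + (snd x)^2.

Lemma nsq_Cmod x : (Cmod x)^2 = nsq x.
Proof. rewrite Cmod2_alt. reflexivity. Qed.

Lemma nsq_ge0 x : 0 <= nsq x.
Proof. unfold nsq. nra. Qed.

Lemma nsq_plus x y : nsq (Cplus x y) <= 2*nsq x + 2*nsq y.
Proof. destruct x as [x1 x2], y as [y1 y2]; unfold nsq; simpl.
  pose proof (pow2_ge_0 (x1-y1)); pose proof (pow2_ge_0 (x2-y2)). nra. Qed.

Lemma nsq_minus x y : nsq (Cminus x y) <= 2*nsq x + 2*nsq y.
Proof. destruct x as [x1 x2], y as [y1 y2]; unfold nsq; simpl.
  pose proof (pow2_ge_0 (x1+y1)); pose proof (pow2_ge_0 (x2+y2)). nra. Qed.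

Lemma nsq_mult x y : nsq (Cmult x y) = nsq x * nsq y.
Proof. destruct x as [x1 x2], y as [y1 y2]; unfold nsq; simpl. ring. Qed.

Lemma nsq_0 : nsq (RtoC 0) = 0.
Proof. unfold nsq; simpl; ring. Qed.

Lemma nsq_eq0 x : nsq x = 0 -> x = RtoC 0.
Proof. destruct x as [x1 x2]; unfold nsq; simpl; intro H.
  assert (x1 = 0) by nra. assert (x2 = 0) by nra. subst. reflexivity. Qed.

Fixpoint rsum (f : nat -> R) (N : nat) : R :=
  match N with O => 0 | S k => rsum f k + f k end.
Fixpoint csum (f : nat -> C) (N : nat) : C :=
  match N with O => RtoC 0 | S k => Cplus (csum f k) (f k) end.

Lemma sum_n_rsum (u : nat -> R) N : sum_n u N = rsum u (S N).
Proof. induction N; simpl. rewrite sum_O. ring. rewrite sum_Sn, IHN. simpl. reflexivity. Qed.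

Lemma rsum_ge0 u N : (forall n, 0 <= u n) -> 0 <= rsum u N.
Proof. intro H; induction N; simpl. lra. specialize (H N). lra. Qed.

Lemma rsum_mono u N M : (forall n, 0 <= u n) -> (N <= M)%nat -> rsum u N <= rsum u M.
Proof. intros H HNM; induction HNM; simpl. lra. specialize (H m). lra. Qed.

Lemma rsum_le u v N : (forall n, (n < N)%nat -> u n <= v n) -> rsum u N <= rsum v N.
Proof. induction N; simpl; intros H. lra. assert (u N <= v N) by (apply H; lia).
  assert (rsum u N <= rsum v N) by (apply IHN; intros; apply H; lia). lra. Qed.

Lemma rsum_ext u v N : (forall n, (n < N)%nat -> u n = v n) -> rsum u N = rsum v N.
Proof. induction N; simpl; intros H. lra. rewrite H by lia. rewrite IHN by (intros; apply H; lia). reflexivity. Qed.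

Lemma rsum_plus u v N : rsum (fun n => u n + v n) N = rsum u N + rsum v N.
Proof. induction N; simpl; lra. Qed.

Lemma rsum_scal c u N : rsum (fun n => c * u n) N = c * rsum u N.
Proof. induction N; simpl. ring. rewrite IHN. ring. Qed.

Lemma rsum_const c N : rsum (fun _ => c) N = INR N * c.
Proof. induction N; simpl rsum. simpl; ring. rewrite IHN, S_INR. ring. Qed.

Lemma rsum_switch (u : nat -> nat -> R) N M :
  rsum (fun i => rsum (u i) M) N = rsum (fun j => rsum (fun i => u i j) N) M.
Proof. induction N; simpl. induction M; simpl; lra.
  rewrite IHN. rewrite <- rsum_plus. reflexivity. Qed.

Lemma ser_lim u : ex_series u -> is_lim_seq (fun N => rsum u (S N)) (Series u).
Proof. intro H. apply Series_correct in H.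
  eapply is_lim_seq_ext. intro N. apply sum_n_rsum. exact H. Qed.

Lemma ser_partial_le u N : (forall n, 0 <= u n) -> ex_series u -> rsum u N <= Series u.
Proof. intros H0 H.
  assert (Hm : forall n, rsum u (S n) <= rsum u (S (S n))).
  { intro n. simpl. specialize (H0 (S n)). simpl in *. lra. }
  pose proof (is_lim_seq_incr_compare _ _ (ser_lim u H) Hm) as Hc.
  destruct N. 
  - apply (Rle_trans _ (rsum u 1)). simpl. specialize (H0 O). lra. apply (Hc O).
  - apply Hc.
Qed.

Lemma ser_bounded u B : (forall n, 0 <= u n) -> (forall N, rsum u N <= B) ->
  ex_series u /\ Series u <= B.
Proof. intros H0 HB.
  assert (Hm : forall n, rsum u (S n) <= rsum u (S (S n))).
  { intro n. simpl. specialize (H0 (S n)). simpl in *. lra. }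
  assert (Hf : ex_finite_lim_seq (fun N => rsum u (S N))).
  { apply (ex_finite_lim_seq_incr _ B). exact Hm. intro; apply HB. }
  destruct Hf as [l Hl].
  assert (Hs : is_series u l).
  { apply (is_lim_seq_ext _ _ _ (fun N => eq_sym (sum_n_rsum u N))) in Hl. exact Hl. }
  split. exists l. exact Hs.
  rewrite (is_series_unique _ _ Hs).
  assert (Rbar_le l B). { apply (is_lim_seq_le (fun N => rsum u (S N)) (fun _ => B)).
    intro; apply HB. exact Hl. apply is_lim_seq_const. }
  exact H.
Qed.

Lemma ser_tail u eps : ex_series u -> 0 < eps -> exists N, forall M, (N <= M)%nat ->
  Series u - rsum u M <= eps.
Proof. intros H He. pose proof (ser_lim u H) as Hl.
  apply is_lim_seq_spec in Hl. destruct (Hl (mkposreal eps He)) as [N HN].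
  exists (S N). intros M HM. destruct M. lia. specialize (HN M ltac:(lia)).
  change (pos (mkposreal eps He)) with eps in HN. apply Rabs_def2 in HN. lra. Qed.
Definition l2 (a : seqC) := ex_series (fun m => nsq (a m)).
Definition nrm2 (a : seqC) := Series (fun m => nsq (a m)).

Lemma in_l2_iff a : in_l2 a <-> l2 a.
Proof. unfold in_l2, l2. split; apply ex_series_ext; intro; rewrite nsq_Cmod; reflexivity. Qed.

Lemma sq_norm_eq a : sq_norm a = nrm2 a.
Proof. unfold sq_norm, nrm2. apply Series_ext. intro; apply nsq_Cmod. Qed.

Lemma nrm2_bound a B : (forall N, rsum (fun m => nsq (a m)) N <= B) -> l2 a /\ nrm2 a <= B.
Proof. intro H. apply ser_bounded. intro; apply nsq_ge0. exact H. Qed.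

Lemma l2_partial a N : l2 a -> rsum (fun m => nsq (a m)) N <= nrm2 a.
Proof. intro H. apply ser_partial_le. intro; apply nsq_ge0. exact H. Qed.

Lemma nrm2_ge0 a : l2 a -> 0 <= nrm2 a.
Proof. intro H. apply (Rle_trans _ (rsum (fun m => nsq (a m)) 0)). simpl; lra. apply l2_partial, H. Qed.

Lemma nsq_le_nrm2 a m : l2 a -> nsq (a m) <= nrm2 a.
Proof. intro H. apply (Rle_trans _ (rsum (fun m => nsq (a m)) (S m))).
  simpl. pose proof (rsum_ge0 (fun m => nsq (a m)) m (fun n => nsq_ge0 _)). lra.
  apply l2_partial, H. Qed.

Lemma l2_add a c : l2 a -> l2 c -> l2 (add_seq a c) /\ nrm2 (add_seq a c) <= 2 * nrm2 a + 2 * nrm2 c.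
Proof. intros Ha Hc. apply nrm2_bound. intro N.
  apply (Rle_trans _ (rsum (fun m => 2 * nsq (a m) + 2 * nsq (c m)) N)).
  apply rsum_le. intros; apply nsq_plus.
  rewrite rsum_plus, !rsum_scal. pose proof (l2_partial a N Ha); pose proof (l2_partial c N Hc). lra. Qed.

Lemma l2_sub a c : l2 a -> l2 c -> l2 (sub_seq a c) /\ nrm2 (sub_seq a c) <= 2 * nrm2 a + 2 * nrm2 c.
Proof. intros Ha Hc. apply nrm2_bound. intro N.
  apply (Rle_trans _ (rsum (fun m => 2 * nsq (a m) + 2 * nsq (c m)) N)).
  apply rsum_le. intros; apply nsq_minus.
  rewrite rsum_plus, !rsum_scal. pose proof (l2_partial a N Ha); pose proof (l2_partial c N Hc). lra. Qed.

Lemma l2_scal l a : l2 a -> l2 (scal_seq l a) /\ nrm2 (scal_seq l a) <= nsq l * nrm2 a.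
Proof. intros Ha. apply nrm2_bound. intro N. unfold scal_seq.
  apply (Rle_trans _ (rsum (fun m => nsq l * nsq (a m)) N)).
  apply rsum_le. intros; rewrite nsq_mult; lra.
  rewrite rsum_scal. pose proof (l2_partial a N Ha). pose proof (nsq_ge0 l). nra. Qed.

Lemma l2_zero : l2 zero_seq /\ nrm2 zero_seq = 0.
Proof. assert (H : l2 zero_seq /\ nrm2 zero_seq <= 0).
  { apply nrm2_bound. intro N. unfold zero_seq. rewrite (rsum_ext _ (fun _ => 0)).
    rewrite rsum_const. lra. intros; apply nsq_0. }
  destruct H as [H1 H2]. split. exact H1. pose proof (nrm2_ge0 _ H1). lra. Qed.

Lemma rsum_stable u N M : (forall m, (N <= m)%nat -> u m = 0) -> (N <= M)%nat -> rsum u M = rsum u N.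
Proof. intros H HM. induction HM. reflexivity. simpl. rewrite IHHM, H by lia. ring. Qed.

Lemma l2_fin a N : (forall m, (N <= m)%nat -> a m = RtoC 0) -> l2 a /\ nrm2 a = rsum (fun m => nsq (a m)) N.
Proof. intro H.
  assert (Hs : forall M, rsum (fun m => nsq (a m)) M <= rsum (fun m => nsq (a m)) N).
  { intro M. destruct (le_lt_dec M N).
    - apply rsum_mono. intro; apply nsq_ge0. exact l.
    - rewrite (rsum_stable _ N M). lra. intros m Hm. rewrite H by exact Hm. apply nsq_0. lia. }
  destruct (nrm2_bound a _ Hs) as [H1 H2]. split. exact H1.
  pose proof (l2_partial a N H1). lra. Qed.

Lemma rsum_ind u N0 M : rsum (fun m => if (m <? N0)%nat then u m else 0) M = rsum u (Nat.min M N0).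
Proof. assert (E: forall f k, rsum f (S k) = rsum f k + f k) by reflexivity.
  induction M. reflexivity. rewrite E, IHM.
  destruct (Nat.ltb_spec M N0).
  - rewrite (Nat.min_l M N0) by lia. rewrite (Nat.min_l (S M) N0) by lia. rewrite E. reflexivity.
  - replace (Nat.min (S M) N0) with (Nat.min M N0) by lia. ring. Qed.

Lemma l2_modif (T a : seqC) (N0 : nat) (c : nat -> R) :
  l2 a -> (forall m, (N0 <= m)%nat -> T m = a m) -> (forall m, 0 <= c m) ->
  (forall m, (m < N0)%nat -> nsq (T m) <= c m * nrm2 a) ->
  l2 T /\ nrm2 T <= (1 + rsum c N0) * nrm2 a.
Proof. intros Ha HT Hc0 Hc. apply nrm2_bound. intro M.
  apply (Rle_trans _ (rsum (fun m => nsq (a m) + (if (m <? N0)%nat then c m * nrm2 a else 0)) M)).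
  - apply rsum_le. intros m _. destruct (Nat.ltb_spec m N0).
    + specialize (Hc m H). pose proof (nsq_ge0 (a m)). lra.
    + rewrite HT by lia. lra.
  - rewrite rsum_plus, rsum_ind. pose proof (l2_partial a M Ha). pose proof (nrm2_ge0 a Ha).
    assert (rsum (fun m => c m * nrm2 a) (Nat.min M N0) <= rsum (fun m => c m * nrm2 a) N0).
    { apply rsum_mono. 2: lia. intro n. apply Rmult_le_pos; auto. }
    rewrite !(rsum_ext (fun m => c m * nrm2 a) (fun m => nrm2 a * c m)) in H1 by (intros; ring). rewrite (rsum_ext (fun m => c m * nrm2 a) (fun m => nrm2 a * c m)) by (intros; ring).
    rewrite !rsum_scal in H1 |- *. rewrite rsum_scal in H1. nra.
Qed.
Definition Sh (a : seqC) : seqC := fun m => match m with O => RtoC 0 | S k => a k end.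
Definition Vop (b : nat -> C) (a : seqC) : seqC :=
  fun m => match m with O => a O | S k => Cplus (a (S k)) (Cmult (b k) (a k)) end.
Fixpoint Viop (b : nat -> C) (a : seqC) (m : nat) : C :=
  match m with O => a O | S k => Cminus (a (S k)) (Cmult (b k) (Viop b a k)) end.

Lemma V_Vi b a : Vop b (Viop b a) = a.
Proof. apply functional_extensionality. intros [|k]; simpl. reflexivity. ring. Qed.

Lemma Vi_V b a : Viop b (Vop b a) = a.
Proof. apply functional_extensionality. intro m. induction m; simpl. reflexivity.
  rewrite IHm. ring. Qed.

Lemma V_add b a c : Vop b (add_seq a c) = add_seq (Vop b a) (Vop b c).
Proof. apply functional_extensionality. unfold add_seq. intros [|k]; simpl. reflexivity. ring. Qed.
Lemma V_scal b l a : Vop b (scal_seq l a) = scal_seq l (Vop b a).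
Proof. apply functional_extensionality. unfold scal_seq. intros [|k]; simpl. reflexivity. ring. Qed.
Lemma V_sub b a c : Vop b (sub_seq a c) = sub_seq (Vop b a) (Vop b c).
Proof. apply functional_extensionality. unfold sub_seq. intros [|k]; simpl. reflexivity. ring. Qed.
Lemma Vi_add b a c : Viop b (add_seq a c) = add_seq (Viop b a) (Viop b c).
Proof. apply functional_extensionality. unfold add_seq. intro m; induction m; simpl. reflexivity.
  rewrite IHm. ring. Qed.
Lemma Vi_scal b l a : Viop b (scal_seq l a) = scal_seq l (Viop b a).
Proof. apply functional_extensionality. unfold scal_seq. intro m; induction m; simpl. reflexivity.
  rewrite IHm. ring. Qed.
Lemma Vi_sub b a c : Viop b (sub_seq a c) = sub_seq (Viop b a) (Viop b c).
Proof. apply functional_extensionality. unfold sub_seq. intro m; induction m; simpl. reflexivity.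
  rewrite IHm. ring. Qed.
Lemma Vi_zero b : Viop b zero_seq = zero_seq.
Proof. apply functional_extensionality. unfold zero_seq. intro m; induction m; simpl. reflexivity.
  rewrite IHm. ring. Qed.

Section Bnd.
Variable (n : nat) (b : nat -> C).
Hypothesis Hb : forall t, (n <= t)%nat -> b t = RtoC 0.

Lemma V_tail a m : (S n <= m)%nat -> Vop b a m = a m.
Proof. intro H. destruct m. lia. simpl. rewrite Hb by lia. ring. Qed.
Lemma Vi_tail a m : (S n <= m)%nat -> Viop b a m = a m.
Proof. intro H. destruct m. lia. simpl. rewrite Hb by lia. ring. Qed.

Definition cV (m : nat) : R := match m with O => 1 | S k => 2 + 2 * nsq (b k) end.
Fixpoint cVi (m : nat) : R := match m with O => 1 | S k => 2 + 2 * nsq (b k) * cVi k end.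

Lemma cVi_ge0 m : 0 <= cVi m.
Proof. induction m; simpl. lra. pose proof (nsq_ge0 (b m)). nra. Qed.

Definition KV := 1 + rsum cV (S n).
Definition KVi := 1 + rsum cVi (S n).

Lemma V_l2 a : l2 a -> l2 (Vop b a) /\ nrm2 (Vop b a) <= KV * nrm2 a.
Proof. intro Ha. apply l2_modif. exact Ha. intros; apply V_tail; auto.
  intros [|k]; simpl. lra. pose proof (nsq_ge0 (b k)). lra.
  intros [|k] _; simpl. apply (Rle_trans _ _ _ (nsq_le_nrm2 a 0 Ha)). lra.
  apply (Rle_trans _ _ _ (nsq_plus _ _)). rewrite nsq_mult.
  pose proof (nsq_le_nrm2 a k Ha). pose proof (nsq_le_nrm2 a (S k) Ha). pose proof (nsq_ge0 (b k)).
  nra. Qed.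

Lemma Vi_pt a m : l2 a -> nsq (Viop b a m) <= cVi m * nrm2 a.
Proof. intro Ha. induction m; simpl. pose proof (nsq_le_nrm2 a 0 Ha). lra.
  apply (Rle_trans _ _ _ (nsq_minus _ _)). rewrite nsq_mult.
  pose proof (nsq_le_nrm2 a (S m) Ha). pose proof (nsq_ge0 (b m)). nra. Qed.

Lemma Vi_l2 a : l2 a -> l2 (Viop b a) /\ nrm2 (Viop b a) <= KVi * nrm2 a.
Proof. intro Ha. apply l2_modif. exact Ha. intros; apply Vi_tail; auto.
  apply cVi_ge0. intros m _; apply Vi_pt; auto. Qed.

Lemma KV_ge0 : 0 <= KV.
Proof. unfold KV. pose proof (rsum_ge0 cV (S n)). assert (forall m, 0 <= cV m).
  intros [|k]; simpl. lra. pose proof (nsq_ge0 (b k)). lra. specialize (H H0). lra. Qed.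
Lemma KVi_ge0 : 0 <= KVi.
Proof. unfold KVi. pose proof (rsum_ge0 cVi (S n) cVi_ge0). lra. Qed.

End Bnd.

Lemma rsum_shift u N : rsum u (S N) = u O + rsum (fun k => u (S k)) N.
Proof. induction N. simpl. ring. change (rsum u (S (S N))) with (rsum u (S N) + u (S N)). rewrite IHN. simpl. ring. Qed.

Lemma Sh_l2 a : l2 a -> l2 (Sh a) /\ nrm2 (Sh a) <= nrm2 a.
Proof. intro Ha. apply nrm2_bound. intros [|N]. simpl. apply nrm2_ge0, Ha.
  rewrite rsum_shift. simpl. rewrite nsq_0. pose proof (l2_partial a N Ha). lra. Qed.

Definition Shp (d : nat) (a : seqC) : seqC := fun m => if (d <=? m)%nat then a (m - d)%nat else RtoC 0.

Lemma Shp_S d a : Shp (S d) a = Sh (Shp d a).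
Proof. apply functional_extensionality. intros [|k]; unfold Shp; simpl. reflexivity.
  destruct (d <=? k)%nat eqn:E. reflexivity. reflexivity. Qed.
Lemma Shp_0 a : Shp 0 a = a.
Proof. apply functional_extensionality. intro m. unfold Shp. simpl. f_equal. lia. Qed.

Lemma Shp_l2 d a : l2 a -> l2 (Shp d a) /\ nrm2 (Shp d a) <= nrm2 a.
Proof. intro Ha. induction d. rewrite Shp_0. split; auto; lra.
  rewrite Shp_S. destruct IHd. destruct (Sh_l2 _ H). split; auto; lra. Qed.
Ltac ceq := match goal with |- @eq _ ?x ?y => change (@eq C x y) end;
  repeat change (plus ?x ?y) with (Cplus x y); repeat change (opp ?x) with (Copp x);
  repeat change (scal ?x ?y) with (Cmult x y).

Ltac req := match goal with |- @eq _ ?x ?y => change (@eq R x y) end;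
  repeat change (plus ?x ?y) with (Rplus x y); repeat change (opp ?x) with (Ropp x);
  repeat change (scal ?x ?y) with (Rmult x y).

Lemma Cmod_nsq x : Cmod x = sqrt (nsq x).
Proof. reflexivity. Qed.

Lemma Cmod_le_nrm2 a m : l2 a -> Cmod (a m) <= sqrt (nrm2 a).
Proof. intro H. rewrite Cmod_nsq. apply sqrt_le_1_alt. apply nsq_le_nrm2, H. Qed.

Lemma series_norm_le (a : nat -> C) (l : C) (r : nat -> R) (L : R) :
  is_series a l -> (forall k, Cmod (a k) <= r k) -> is_series r L -> Cmod l <= L.
Proof. intros Ha Hr HL.
  assert (Hp : forall N, Cmod (sum_n a N) <= sum_n r N).
  { induction N. rewrite !sum_O. apply Hr. rewrite !sum_Sn.
    apply (Rle_trans _ _ _ (Cmod_triangle _ _)). specialize (Hr (S N)). 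
    change (plus (sum_n r N) (r (S N))) with (sum_n r N + r (S N)). lra. }
  assert (H1 : is_lim_seq (fun N => Cmod (sum_n a N)) (Cmod l)).
  { eapply filterlim_comp. exact Ha. exact (filterlim_norm (K:=C_AbsRing) (V:=C_NormedModule) l). }
  assert (H2 : is_lim_seq (sum_n r) L) by exact HL.
  exact (is_lim_seq_le _ _ _ _ Hp H1 H2). Qed.

Lemma is_series_eq_l {K : AbsRing} {V : NormedModule K} (a : nat -> V) l l' :
  is_series a l -> l = l' -> is_series a l'.
Proof. intros H <-. exact H. Qed.

Section PS.
Variable (n : nat) (b : nat -> C).
Hypothesis Hb : forall t, (n <= t)%nat -> b t = RtoC 0.

Lemma partial_rel c z N : sum_n (fun m => Cmult (c m) (fbasis b m z)) N =
   Cplus (sum_n (fun m => Cmult (Vop b c m) (Cpow z m)) N) (Cmult (Cmult (c N) (b N)) (Cpow z (S N))).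
Proof. induction N.
  - rewrite !sum_O. unfold fbasis. simpl. ring.
  - rewrite !sum_Sn. change (plus ?x ?y) with (Cplus x y). rewrite IHN. unfold fbasis. simpl. ring.
Qed.

Lemma rep_iff c z w : represents b c z w <-> is_series (fun m => Cmult (Vop b c m) (Cpow z m)) w.
Proof. unfold represents, is_series. split; intro H.
  - eapply filterlim_ext_loc. 2: exact H. exists n. intros N HN. simpl.
    rewrite partial_rel, (Hb N HN). replace (Cmult (Cmult (c N) (RtoC 0)) (Cpow z (S N))) with (RtoC 0) by ring. rewrite Cplus_0_r. reflexivity.
  - eapply filterlim_ext_loc. 2: exact H. exists n. intros N HN. simpl.
    rewrite partial_rel, (Hb N HN). replace (Cmult (Cmult (c N) (RtoC 0)) (Cpow z (S N))) with (RtoC 0) by ring. rewrite Cplus_0_r. reflexivity.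
Qed.

Lemma ps_ex c z : l2 c -> Cmod z < 1 -> ex_series (fun m => Cmult (c m) (Cpow z m)).
Proof. intros Hc Hz. apply (@ex_series_le C_AbsRing C_CompleteNormedModule _ (fun m => sqrt (nrm2 c) * Cmod z ^ m)).
  - intro m. change norm with Cmod. rewrite Cmod_mult, Cmod_pow.
    apply Rmult_le_compat_r. apply pow_le, Cmod_ge_0. apply Cmod_le_nrm2, Hc.
  - assert (Hg : ex_series (fun m => Cmod z ^ m)).
    { apply ex_series_geom. rewrite Rabs_pos_eq. exact Hz. apply Cmod_ge_0. }
    destruct Hg as [l Hl]. exists (sqrt (nrm2 c) * l).
    apply (is_series_scal_l (sqrt (nrm2 c))) in Hl. exact Hl. Qed.

Lemma ps_shift e z w : is_series (fun m => Cmult (e m) (Cpow z m)) w ->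
  is_series (fun m => Cmult (Sh e m) (Cpow z m)) (Cmult z w).
Proof. intro H. apply is_series_decr_1.
  apply (is_series_scal_l z) in H.
  eapply is_series_eq_l. eapply is_series_ext; [|exact H].
  intro k. change (scal z ?x) with (Cmult z x). simpl. ring.
  change (scal z w) with (Cmult z w). simpl. change (plus ?x ?y) with (Cplus x y). change (opp ?x) with (Copp x). ring. Qed.
End PS.

Lemma sum_n_C0 (a : nat -> C) N : (forall k, (k <= N)%nat -> a k = RtoC 0) -> sum_n a N = RtoC 0.
Proof. induction N; intro H. rewrite sum_O; apply H; lia.
  rewrite sum_Sn, IHN. rewrite (H (S N)) by lia. exact (Cplus_0_r _).
  intros; apply H; lia. Qed.

Lemma ps_unique (e : seqC) : l2 e ->
  (forall x, 0 < x < 1 -> is_series (fun m => Cmult (e m) (Cpow (RtoC x) m)) (RtoC 0)) ->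
  forall m, e m = RtoC 0.
Proof. intros He Hs.
  set (B := sqrt (nrm2 e)).
  assert (HB : 0 <= B) by apply sqrt_pos.
  assert (Hind : forall m, (forall j, (j < m)%nat -> e j = RtoC 0) -> e m = RtoC 0).
  { intros m Hj.
    assert (Hbnd : forall x, 0 < x < 1 -> Cmod (e m) <= B * x / (1 - x)).
    { intros x Hx.
      assert (H0 : is_series (fun k => Cmult (e (m + k)%nat) (Cpow (RtoC x) (m + k))) (RtoC 0)).
      { destruct m. simpl. exact (Hs x Hx).
        apply (is_series_incr_n (fun k => Cmult (e k) (Cpow (RtoC x) k))). lia.
        eapply is_series_eq_l. exact (Hs x Hx).
        rewrite sum_n_C0. ceq. ring.
        intros k Hk. rewrite Hj by (simpl in Hk; lia). ring. }
      assert (Hx0 : x ^ m <> 0) by (apply pow_nonzero; lra).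
      assert (H1 : is_series (fun k => Cmult (e (m + k)%nat) (Cpow (RtoC x) k)) (RtoC 0)).
      { apply (is_series_scal_l (RtoC (/ x ^ m))) in H0.
        eapply is_series_eq_l. eapply is_series_ext; [|exact H0].
        - intro k. ceq. cbv beta. rewrite Cpow_add_r, <- RtoC_pow.
          transitivity (Cmult (Cmult (RtoC (/ x^m)) (RtoC (x^m))) (Cmult (e (m+k)%nat) (Cpow (RtoC x) k))). ring.
          rewrite <- RtoC_mult, Rinv_l by exact Hx0. ring.
        - ceq. ring. }
      assert (H2 : is_series (fun k => Cmult (e (m + S k)%nat) (Cpow (RtoC x) (S k))) (Copp (e m))).
      { apply (is_series_incr_1 (fun k => Cmult (e (m + k)%nat) (Cpow (RtoC x) k))).
        eapply is_series_eq_l. exact H1. ceq.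
        rewrite Nat.add_0_r. simpl. ring. }
      assert (H3 : is_series (fun k => B * x ^ (S k)) (B * x / (1 - x))).
      { assert (Hg := is_series_geom x ltac:(rewrite Rabs_pos_eq; lra)).
        apply (is_series_scal_l (B * x)) in Hg.
        eapply is_series_eq_l. eapply is_series_ext; [|exact Hg].
        intro k. req. simpl. ring.
        req. field. lra. }
      rewrite <- Cmod_opp. apply (series_norm_le _ _ (fun k => B * x ^ S k) _ H2). 2: exact H3.
      intro k. rewrite Cmod_mult, Cmod_pow, Cmod_R, Rabs_pos_eq by lra.
      apply Rmult_le_compat_r. apply pow_le; lra. apply Cmod_le_nrm2, He. }
    destruct (Req_dec (Cmod (e m)) 0) as [Hz|Hnz].
    - apply Cmod_eq_0, Hz.
    - exfalso. set (t := Cmod (e m)) in *.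
      assert (Ht0 : 0 <= t) by apply Cmod_ge_0.
      assert (Ht : 0 < t) by (destruct (Rle_lt_or_eq_dec _ _ Ht0); [assumption | congruence]).
      set (x := t / (2 * (B + t))).
      assert (Hxe : x * (2 * (B + t)) = t) by (unfold x; field; lra).
      assert (Hx : 0 < x <= 1 / 2).
      { split. unfold x. apply Rdiv_lt_0_compat; lra. nra. }
      specialize (Hbnd x ltac:(lra)).
      assert (t * (1 - x) <= B * x).
      { apply (Rmult_le_compat_r (1 - x)) in Hbnd. 2: lra.
        replace (B * x / (1 - x) * (1 - x)) with (B * x) in Hbnd by (field; lra). exact Hbnd. }
      assert (x * (B + t) = t / 2) by (unfold x; field; lra).
      nra. }
  assert (Hall : forall m j, (j < m)%nat -> e j = RtoC 0).
  { induction m. intros; lia. intros j Hj. destruct (Nat.eq_dec j m). subst. apply Hind, IHm.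
    apply IHm; lia. }
  intro m. apply (Hall (S m)). lia.
Qed.
Lemma S_char n b S (Hb : forall t, (n <= t)%nat -> b t = RtoC 0) (HS : is_n_shift b S) a :
  l2 a -> S a = Viop b (Sh (Vop b a)) /\ l2 (S a).
Proof.
  intro Ha. assert (Ha' : in_l2 a) by (apply in_l2_iff; auto).
  destruct (HS a Ha') as [HSa Hrep]. apply in_l2_iff in HSa.
  set (E := sub_seq (Vop b (S a)) (Sh (Vop b a))).
  assert (HE : l2 E).
  { apply l2_sub. apply (V_l2 n b Hb); auto. apply Sh_l2, (V_l2 n b Hb a Ha). }
  assert (E0 : forall m, E m = RtoC 0).
  { apply ps_unique. exact HE. intros x Hx.
    assert (Hz : Cmod (RtoC x) < 1) by (rewrite Cmod_R, Rabs_pos_eq; lra).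
    destruct (ps_ex (Vop b a) (RtoC x) (proj1 (V_l2 n b Hb a Ha)) Hz) as [w Hw].
    assert (Hr : represents b a (RtoC x) w) by (apply (rep_iff n b Hb); exact Hw).
    specialize (Hrep _ _ Hz Hr). apply (rep_iff n b Hb) in Hrep.
    pose proof (ps_shift _ _ _ Hw) as Hsh.
    pose proof (is_series_minus _ _ _ _ Hrep Hsh) as Hd.
    eapply is_series_eq_l. eapply is_series_ext; [|exact Hd].
    intro k. unfold E, sub_seq. ceq. ring. ceq. ring. }
  split. 2: exact HSa.
  rewrite <- (Vi_V b (S a)). f_equal. apply functional_extensionality. intro m.
  specialize (E0 m). unfold E, sub_seq in E0.
  replace (Vop b (S a) m) with (Cplus (Cminus (Vop b (S a) m) (Sh (Vop b a) m)) (Sh (Vop b a) m)) by ring.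
  rewrite E0. ring.
Qed.
Lemma csum_ext f g N : (forall n, (n < N)%nat -> f n = g n) -> csum f N = csum g N.
Proof. induction N; simpl; intros H. reflexivity. rewrite H by lia. rewrite IHN by (intros; apply H; lia). reflexivity. Qed.

Lemma csum_plus f g N : csum (fun n => Cplus (f n) (g n)) N = Cplus (csum f N) (csum g N).
Proof. induction N; simpl. ring. rewrite IHN. ring. Qed.

Lemma csum_minus f g N : csum (fun n => Cminus (f n) (g n)) N = Cminus (csum f N) (csum g N).
Proof. induction N; simpl. ring. rewrite IHN. ring. Qed.

Lemma csum_scal c f N : csum (fun n => Cmult c (f n)) N = Cmult c (csum f N).
Proof. induction N; simpl. ring. rewrite IHN. ring. Qed.

Lemma csum_zero f N : (forall n, (n < N)%nat -> f n = RtoC 0) -> csum f N = RtoC 0.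
Proof. intro H. rewrite (csum_ext f (fun _ => RtoC 0)) by exact H. clear H.
  induction N; simpl. reflexivity. rewrite IHN. ring. Qed.

Lemma csum_const c N : csum (fun _ => c) N = Cmult (RtoC (INR N)) c.
Proof. induction N; simpl csum. simpl. ring. rewrite IHN, S_INR, RtoC_plus. ring. Qed.

Lemma csum_split f i K : csum f (i + K) = Cplus (csum f i) (csum (fun s => f (i + s)%nat) K).
Proof. induction K. rewrite Nat.add_0_r. simpl. ring.
  rewrite Nat.add_succ_r. simpl. rewrite IHK. ring. Qed.

Lemma csum_first f M : csum f (S M) = Cplus (f O) (csum (fun k => f (S k)) M).
Proof. induction M. simpl. ring. change (csum f (S (S M))) with (Cplus (csum f (S M)) (f (S M))).
  rewrite IHM. simpl. ring. Qed.

Lemma csum_rev G i : csum (fun j => G (i - j)%nat) (S i) = csum G (S i).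
Proof. induction i. simpl. reflexivity.
  rewrite csum_first. simpl (S i - 0)%nat.
  rewrite (csum_ext (fun k => G (S i - S k)%nat) (fun k => G (i - k)%nat)) by (intros; f_equal).
  rewrite IHi. change (csum G (S (S i))) with (Cplus (csum G (S i)) (G (S i))). ring. Qed.

Lemma csum_ind F A B : csum (fun d => if (d <? B)%nat then F d else RtoC 0) A = csum F (Nat.min A B).
Proof. induction A. reflexivity. change (csum ?f (S A)) with (Cplus (csum f A) (f A)). rewrite IHA.
  destruct (Nat.ltb_spec A B).
  - rewrite (Nat.min_l A B) by lia. rewrite (Nat.min_l (S A) B) by lia. reflexivity.
  - replace (Nat.min (S A) B) with (Nat.min A B) by lia. ring. Qed.

Lemma csum_delta F c A : csum (fun d => if (d =? c)%nat then F d else RtoC 0) A =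
  if (c <? A)%nat then F c else RtoC 0.
Proof. induction A. reflexivity. change (csum ?f (S A)) with (Cplus (csum f A) (f A)). rewrite IHA.
  destruct (Nat.eqb_spec A c); destruct (Nat.ltb_spec c A); destruct (Nat.ltb_spec c (S A)); subst;
  try lia; ring. Qed.

Lemma csum_switch (u : nat -> nat -> C) N M :
  csum (fun i => csum (u i) M) N = csum (fun j => csum (fun i => u i j) N) M.
Proof. induction N; simpl. rewrite csum_zero. reflexivity. intros; reflexivity.
  rewrite IHN. rewrite <- csum_plus. reflexivity. Qed.

Lemma nsq_RtoC r : nsq (RtoC r) = r * r.
Proof. unfold nsq; simpl. ring. Qed.

Lemma jensen_step s w k Q : 0 <= k -> 0 <= Q -> nsq s <= k * Q ->
  nsq (Cplus s w) <= (k + 1) * (Q + nsq w).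
Proof. intros Hk HQ H. destruct s as [s1 s2], w as [z1 z2]. unfold nsq in *. simpl fst in *; simpl snd in *.
  destruct (Req_dec k 0) as [H0|H0].
  - subst k. assert (s1 ^ 2 = 0) by nra. assert (s2 ^ 2 = 0) by nra.
    assert (s1 = 0) by nra. assert (s2 = 0) by nra. subst. nra.
  - assert (HK' : 0 < k) by lra.
    assert (2 * s1 * z1 * k <= s1 ^ 2 + k ^ 2 * z1 ^ 2) by (pose proof (pow2_ge_0 (s1 - k * z1)); nra).
    assert (2 * s2 * z2 * k <= s2 ^ 2 + k ^ 2 * z2 ^ 2) by (pose proof (pow2_ge_0 (s2 - k * z2)); nra).
    assert (2 * s1 * z1 + 2 * s2 * z2 <= Q + k * (z1^2 + z2^2)).
    { apply (Rmult_le_reg_r k). exact HK'. nra. }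
    nra.
Qed.

Lemma jensen z K : nsq (csum z K) <= INR K * rsum (fun s => nsq (z s)) K.
Proof. induction K. simpl. rewrite nsq_0. lra.
  change (csum z (S K)) with (Cplus (csum z K) (z K)).
  change (rsum ?f (S K)) with (rsum f K + f K). rewrite S_INR.
  apply jensen_step. apply pos_INR. apply rsum_ge0; intro; apply nsq_ge0. exact IHK.
Qed.
Lemma rsum_split f i K : rsum f (i + K) = rsum f i + rsum (fun s => f (i + s)%nat) K.
Proof. induction K. rewrite Nat.add_0_r. simpl. ring.
  rewrite Nat.add_succ_r. simpl. rewrite IHK. ring. Qed.

Lemma rsum_zero f N : (forall n, (n < N)%nat -> f n = 0) -> rsum f N = 0.
Proof. intro H. rewrite (rsum_ext f (fun _ => 0)) by exact H. rewrite rsum_const. ring. Qed.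

Lemma regroup f i K A : (i + K <= A)%nat ->
  rsum (fun a => if andb (i <=? a)%nat (a <? i + K)%nat then f a else 0) A = rsum (fun s => f (i + s)%nat) K.
Proof. intro H. rewrite (rsum_stable _ (i + K) A). 3: exact H.
  - rewrite rsum_split. rewrite rsum_zero. rewrite Rplus_0_l. apply rsum_ext. intros s Hs.
    destruct (Nat.leb_spec i (i + s)); destruct (Nat.ltb_spec (i + s) (i + K)); try lia. reflexivity.
    intros a Ha. destruct (Nat.leb_spec i a); try lia. reflexivity.
  - intros a Ha. destruct (Nat.leb_spec i a); destruct (Nat.ltb_spec a (i + K)); try lia; reflexivity.
Qed.

Definition e0 : seqC := fun m => if (m =? 0)%nat then RtoC 1 else RtoC 0.
Definition Pt (N : nat) (a : seqC) : seqC := fun m => if (m <? N)%nat then a m else RtoC 0.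
Definition Dw (K a0 : nat) (h : seqC) : seqC :=
  fun j => if andb (a0 <? j + K)%nat (j <=? a0)%nat then h j else RtoC 0.

Lemma l2_e0 : l2 e0.
Proof. apply (proj1 (l2_fin e0 1 ltac:(intros m Hm; unfold e0; destruct (Nat.eqb_spec m 0); [lia|reflexivity]))). Qed.
Lemma l2_Pt N a : l2 (Pt N a).
Proof. apply (proj1 (l2_fin (Pt N a) N ltac:(intros m Hm; unfold Pt; destruct (Nat.ltb_spec m N); [lia|reflexivity]))). Qed.
Lemma Dw_fin K a0 h M : (S a0 <= M)%nat -> l2 (Dw K a0 h) /\ nrm2 (Dw K a0 h) = rsum (fun m => nsq (Dw K a0 h m)) M.
Proof. intro HM. apply l2_fin. intros m Hm. unfold Dw.
  destruct (Nat.leb_spec m a0); try lia. rewrite Bool.andb_false_r. reflexivity. Qed.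
Lemma Pt_Dw K a0 h : Pt (S a0) (Dw K a0 h) = Dw K a0 h.
Proof. apply functional_extensionality; intro m. unfold Pt, Dw.
  destruct (Nat.ltb_spec m (S a0)); destruct (Nat.leb_spec m a0); try lia; try reflexivity.
  rewrite Bool.andb_false_r. reflexivity. Qed.

Section Abs.
Variable Y : seqC -> seqC.
Variable CY : R.
Hypothesis HCY : 0 <= CY.
Hypothesis HYl2 : forall a, l2 a -> l2 (Y a).
Hypothesis HYadd : forall a c, l2 a -> l2 c -> Y (add_seq a c) = add_seq (Y a) (Y c).
Hypothesis HYscal : forall l a, l2 a -> Y (scal_seq l a) = scal_seq l (Y a).
Hypothesis HYbnd : forall a, l2 a -> nrm2 (Y a) <= CY * nrm2 a.
Hypothesis HYsh : forall a, l2 a -> Y (Sh a) = Sh (Y a).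

Definition phi := Y e0.

Lemma Y_zero : Y zero_seq = zero_seq.
Proof. replace zero_seq with (scal_seq (RtoC 0) zero_seq) at 1.
  rewrite HYscal. apply functional_extensionality; intro; unfold scal_seq, zero_seq; ring.
  apply (proj1 l2_zero). apply functional_extensionality; intro; unfold scal_seq, zero_seq; ring. Qed.

Lemma Y_Shp d x : l2 x -> Y (Shp d x) = Shp d (Y x).
Proof. intro Hx. induction d. rewrite !Shp_0. reflexivity.
  rewrite !Shp_S, HYsh, IHd. reflexivity. apply Shp_l2, Hx. Qed.

Definition conv (N : nat) (a : seqC) : seqC :=
  fun i => csum (fun j => if (j <=? i)%nat then Cmult (a j) (phi (i - j)%nat) else RtoC 0) N.

Lemma Y_Pt N a : Y (Pt N a) = conv N a.
Proof. induction N.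
  - replace (Pt 0 a) with zero_seq. rewrite Y_zero. reflexivity.
    apply functional_extensionality; intro; reflexivity.
  - replace (Pt (S N) a) with (add_seq (Pt N a) (scal_seq (a N) (Shp N e0))).
    + rewrite HYadd, HYscal, Y_Shp, IHN. 2: apply l2_e0. 2: apply Shp_l2, l2_e0.
      2: apply l2_Pt. 2: apply l2_scal, Shp_l2, l2_e0.
      apply functional_extensionality; intro i. unfold conv, add_seq, scal_seq, Shp, phi. simpl csum.
      destruct (Nat.leb_spec N i); ring.
    + apply functional_extensionality; intro m. unfold Pt, add_seq, scal_seq, Shp, e0.
      destruct (Nat.ltb_spec m (S N)); destruct (Nat.ltb_spec m N); destruct (Nat.leb_spec N m);
      try destruct (Nat.eqb_spec (m - N) 0); try lia; try ring.
      replace m with N by lia. ring.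
Qed.

Definition cK (K d : nat) : C := Cmult (RtoC (INR (K - d) / INR K)) (phi d).
Definition T (K : nat) (h : seqC) : seqC := fun i => csum (fun d => Cmult (cK K d) (Shp d h i)) K.

Lemma window_id K h i : (0 < K)%nat ->
  Cmult (RtoC (INR K)) (T K h i) = csum (fun s => Y (Dw K (i + s) h) i) K.
Proof. intro HK.
  assert (HKr : INR K <> 0) by (apply not_0_INR; lia).
  set (G := fun d => Cmult (RtoC (INR (K - d))) (Cmult (h (i - d)%nat) (phi d))).
  transitivity (csum (fun s => csum (fun j => if (i + s <? j + K)%nat then Cmult (h j) (phi (i - j)%nat) else RtoC 0) (S i)) K).
  2: { apply csum_ext. intros s Hs. rewrite <- (Pt_Dw K (i + s) h), Y_Pt. unfold conv.
       replace (S (i + s)) with (S i + s)%nat by lia. rewrite csum_split.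
       match goal with |- context [Cplus ?A (csum ?f s)] => rewrite (csum_zero f s) end. rewrite Cplus_0_r.
       apply csum_ext. intros j Hj. unfold Dw.
       destruct (Nat.leb_spec j i); destruct (Nat.leb_spec j (i + s)); destruct (Nat.ltb_spec (i + s) (j + K));
         try lia; simpl; ring.
       intros t Ht. destruct (Nat.leb_spec (S i + t) i). lia. reflexivity. }
  rewrite csum_switch.
  transitivity (csum (fun j => G (i - j)%nat) (S i)).
  2: { apply csum_ext. intros j Hj.
       rewrite (csum_ext _ (fun s => if (s <? K - (i - j))%nat then Cmult (h j) (phi (i - j)%nat) else RtoC 0)).
       rewrite csum_ind, csum_const. unfold G. replace (i - (i - j))%nat with j by lia.
       replace (Nat.min K (K - (i - j))) with (K - (i - j))%nat by lia. ring.
       intros s Hs. destruct (Nat.ltb_spec (i + s) (j + K)); destruct (Nat.ltb_spec s (K - (i - j))); try lia; reflexivity. }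
  rewrite csum_rev.
  rewrite (csum_ext G (fun d => if (d <? K)%nat then G d else RtoC 0)).
  2: { intros d Hd. destruct (Nat.ltb_spec d K). reflexivity. unfold G.
       replace (K - d)%nat with O by lia. simpl. ring. }
  rewrite csum_ind. unfold T. rewrite <- csum_scal.
  rewrite (csum_ext _ (fun d => if (d <? S i)%nat then G d else RtoC 0)).
  rewrite csum_ind. f_equal. lia.
  intros d Hd. unfold cK, Shp, G. destruct (Nat.ltb_spec d (S i)); destruct (Nat.leb_spec d i); try lia.
  - rewrite <- (Cmult_assoc (RtoC (INR (K - d) / INR K))). 
    transitivity (Cmult (RtoC (INR K * (INR (K - d) / INR K))) (Cmult (h (i - d)%nat) (phi d))).
    rewrite RtoC_mult. ring. f_equal. f_equal. field. exact HKr.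
  - ring.
Qed.

Lemma T_pt_bound K h i : (0 < K)%nat ->
  nsq (T K h i) <= / INR K * rsum (fun s => nsq (Y (Dw K (i + s) h) i)) K.
Proof. intro HK. assert (HKp : 0 < INR K) by (apply lt_0_INR; lia).
  pose proof (jensen (fun s => Y (Dw K (i + s) h) i) K) as J.
  rewrite <- window_id in J by exact HK. rewrite nsq_mult, nsq_RtoC in J.
  apply (Rmult_le_reg_l (INR K * INR K)). nra.
  replace (INR K * INR K * (/ INR K * rsum (fun s => nsq (Y (Dw K (i + s) h) i)) K))
    with (INR K * rsum (fun s => nsq (Y (Dw K (i + s) h) i)) K) by (field; lra). exact J.
Qed.

Lemma T_bound K h N : (0 < K)%nat -> l2 h -> rsum (fun i => nsq (T K h i)) N <= CY * nrm2 h.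
Proof. intros HK Hh. assert (HKp : 0 < INR K) by (apply lt_0_INR; lia).
  assert (HKi : 0 <= / INR K) by (left; apply Rinv_0_lt_compat; lra).
  set (f := fun a i => nsq (Y (Dw K a h) i)).
  apply (Rle_trans _ (rsum (fun i => / INR K * rsum (fun s => f (i + s)%nat i) K) N)).
  { apply rsum_le. intros; apply T_pt_bound; auto. }
  rewrite rsum_scal.
  rewrite (rsum_ext (fun i => rsum (fun s => f (i+s)%nat i) K)
     (fun i => rsum (fun a => if andb (i <=? a)%nat (a <? i + K)%nat then f a i else 0) (N + K))).
  2: { intros i Hi. symmetry. apply (regroup (fun a => f a i)). lia. }
  rewrite rsum_switch.
  apply (Rle_trans _ (/ INR K * rsum (fun a => CY * rsum (fun j => nsq (Dw K a h j)) (N + K)) (N + K))).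
  { apply Rmult_le_compat_l. exact HKi.
    apply rsum_le. intros a Ha.
    apply (Rle_trans _ (rsum (fun i => f a i) N)).
    { apply rsum_le. intros i _. destruct (andb _ _). lra. unfold f; apply nsq_ge0. }
    apply (Rle_trans _ (nrm2 (Y (Dw K a h)))). apply l2_partial, HYl2, (proj1 (Dw_fin K a h (S a) (Nat.le_refl _))).
    destruct (Dw_fin K a h (N + K) ltac:(lia)) as [Hl Heq]. rewrite <- Heq. apply HYbnd, Hl. }
  rewrite rsum_scal, rsum_switch.
  apply (Rle_trans _ (/ INR K * (CY * rsum (fun j => INR K * nsq (h j)) (N + K)))).
  { apply Rmult_le_compat_l. exact HKi. apply Rmult_le_compat_l. exact HCY.
    apply rsum_le. intros j Hj.
    rewrite (rsum_ext _ (fun a => nsq (h j) * (if andb (j <=? a)%nat (a <? j + K)%nat then 1 else 0))).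
    2: { intros a Ha. unfold Dw. destruct (Nat.ltb_spec a (j+K)); destruct (Nat.leb_spec j a); simpl;
         try rewrite nsq_0; ring. }
    rewrite rsum_scal. rewrite Rmult_comm. apply Rmult_le_compat_r. apply nsq_ge0.
    apply (Rle_trans _ (rsum (fun a => if andb (j <=? a)%nat (a <? j + K)%nat then 1 else 0) (N + K + (j + K)))).
    apply rsum_mono. intro; destruct (andb _ _); lra. lia.
    rewrite (regroup (fun _ => 1)) by lia. rewrite rsum_const. lra. }
  rewrite rsum_scal. pose proof (l2_partial h (N + K) Hh).
  replace (/ INR K * (CY * (INR K * rsum (fun j => nsq (h j)) (N + K))))
    with (CY * rsum (fun j => nsq (h j)) (N + K)) by (field; lra). nra.
Qed.

Lemma T_l2 K h : (0 < K)%nat -> l2 h -> l2 (T K h) /\ nrm2 (T K h) <= CY * nrm2 h.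
Proof. intros HK Hh. apply nrm2_bound. intro N. apply T_bound; auto. Qed.

End Abs.
Lemma Pt_S N a : Pt (S N) a = add_seq (Pt N a) (scal_seq (a N) (Shp N e0)).
Proof. apply functional_extensionality; intro m. unfold Pt, add_seq, scal_seq, Shp, e0.
  destruct (Nat.ltb_spec m (S N)); destruct (Nat.ltb_spec m N); destruct (Nat.leb_spec N m);
  try destruct (Nat.eqb_spec (m - N) 0); try lia; try ring.
  replace m with N by lia. ring. Qed.

Lemma Shp_sub d a c : Shp d (sub_seq a c) = sub_seq (Shp d a) (Shp d c).
Proof. apply functional_extensionality; intro m. unfold Shp, sub_seq. destruct (d <=? m)%nat; ring. Qed.

Lemma tail_rsum a D M : l2 a ->
  rsum (fun i => if (i <? D)%nat then 0 else nsq (a i)) M <= nrm2 a - rsum (fun i => nsq (a i)) D.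
Proof. intro Ha.
  assert (E1 : rsum (fun i => (if (i <? D)%nat then 0 else nsq (a i)) + (if (i <? D)%nat then nsq (a i) else 0)) M
               = rsum (fun i => nsq (a i)) M).
  { apply rsum_ext; intros i _; destruct (i <? D)%nat; ring. }
  rewrite rsum_plus, rsum_ind in E1.
  pose proof (l2_partial a D Ha). pose proof (l2_partial a M Ha).
  destruct (le_lt_dec M D).
  - rewrite Nat.min_l in E1 by exact l. lra.
  - rewrite Nat.min_r in E1 by lia. lra.
Qed.

Section Abs2.
Variable Y : seqC -> seqC.
Variable CY : R.
Hypothesis HCY : 0 <= CY.
Hypothesis HYl2 : forall a, l2 a -> l2 (Y a).
Hypothesis HYadd : forall a c, l2 a -> l2 c -> Y (add_seq a c) = add_seq (Y a) (Y c).
Hypothesis HYscal : forall l a, l2 a -> Y (scal_seq l a) = scal_seq l (Y a).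
Hypothesis HYbnd : forall a, l2 a -> nrm2 (Y a) <= CY * nrm2 a.
Hypothesis HYsh : forall a, l2 a -> Y (Sh a) = Sh (Y a).

Notation T := (T Y).
Notation phi := (phi Y).
Notation cK := (cK Y).

Lemma Y_sub a c : l2 a -> l2 c -> Y (sub_seq a c) = sub_seq (Y a) (Y c).
Proof. intros Ha Hc. replace (sub_seq a c) with (add_seq a (scal_seq (RtoC (-1)) c)).
  rewrite HYadd, HYscal; auto. apply functional_extensionality; intro; unfold add_seq, sub_seq, scal_seq; ring.
  apply l2_scal, Hc. apply functional_extensionality; intro; unfold add_seq, sub_seq, scal_seq; ring. Qed.

Lemma T_add K a c : T K (add_seq a c) = add_seq (T K a) (T K c).
Proof. apply functional_extensionality; intro i. unfold T, add_seq. rewrite <- csum_plus.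
  apply csum_ext; intros d _. unfold Shp. destruct (d <=? i)%nat; ring. Qed.
Lemma T_sub K a c : T K (sub_seq a c) = sub_seq (T K a) (T K c).
Proof. apply functional_extensionality; intro i. unfold T, sub_seq. rewrite <- csum_minus.
  apply csum_ext; intros d _. unfold Shp. destruct (d <=? i)%nat; ring. Qed.
Lemma T_scal K l a : T K (scal_seq l a) = scal_seq l (T K a).
Proof. apply functional_extensionality; intro i. unfold T, scal_seq. rewrite <- csum_scal.
  apply csum_ext; intros d _. unfold Shp. destruct (d <=? i)%nat; ring. Qed.
Lemma T_zero K : T K zero_seq = zero_seq.
Proof. apply functional_extensionality; intro i. unfold T. apply csum_zero. intros.
  unfold Shp, zero_seq. destruct (n <=? i)%nat; ring. Qed.

Lemma T_Shp K N x : T K (Shp N x) = Shp N (T K x).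
Proof. apply functional_extensionality; intro i.
  change (Shp N (T K x) i) with (if (N <=? i)%nat then T K x (i - N)%nat else RtoC 0).
  unfold T. destruct (Nat.leb_spec N i).
  - apply csum_ext. intros d Hd. unfold Shp. destruct (Nat.leb_spec d i); destruct (Nat.leb_spec N (i - d));
    destruct (Nat.leb_spec d (i - N)); try lia; try ring. replace (i - d - N)%nat with (i - N - d)%nat by lia. ring.
  - apply csum_zero. intros d Hd. unfold Shp. destruct (Nat.leb_spec d i); destruct (Nat.leb_spec N (i - d));
    try lia; ring.
Qed.

Lemma T_e0 K i : T K e0 i = if (i <? K)%nat then cK K i else RtoC 0.
Proof. unfold T. rewrite (csum_ext _ (fun d => if (d =? i)%nat then cK K d else RtoC 0)).
  apply csum_delta. intros d Hd. unfold Shp, e0.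
  destruct (Nat.leb_spec d i); destruct (Nat.eqb_spec (i - d) 0); destruct (Nat.eqb_spec d i); try lia; ring.
Qed.

Lemma l2_phi : l2 phi.
Proof. apply HYl2, l2_e0. Qed.

Lemma rho_lim eps : 0 < eps -> exists K0, (0 < K0)%nat /\ forall K, (K0 <= K)%nat ->
  nrm2 (sub_seq (T K e0) phi) <= eps.
Proof. intro He. set (u := fun i => nsq (phi i)).
  destruct (ser_tail u (eps / 2) l2_phi ltac:(lra)) as [D HD]. specialize (HD D (Nat.le_refl _)).
  assert (HD' : nrm2 phi - rsum (fun i => nsq (phi i)) D <= eps / 2) by exact HD. pose proof (nrm2_ge0 _ l2_phi) as Hp.
  destruct (INR_unbounded (2 * INR D * nrm2 phi / eps)) as [K1 HK1].
  exists (Nat.max (Nat.max K1 D) 1). split. lia. intros K HK.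
  assert (HKp : 0 < INR K) by (apply lt_0_INR; lia).
  assert (HDK : INR D <= INR K) by (apply le_INR; lia).
  assert (HK1K : INR K1 <= INR K) by (apply le_INR; lia).
  assert (Hq : INR D / INR K * nrm2 phi <= eps / 2).
  { apply (Rmult_le_reg_r (2 * INR K / eps)). apply Rdiv_lt_0_compat; lra.
    replace (INR D / INR K * nrm2 phi * (2 * INR K / eps)) with (2 * INR D * nrm2 phi / eps) by (field; lra).
    replace (eps / 2 * (2 * INR K / eps)) with (INR K) by (field; lra). lra. }
  assert (Hpt : forall i, nsq (sub_seq (T K e0) phi i) <= INR D / INR K * u i + (if (i <? D)%nat then 0 else u i)).
  { intro i. unfold sub_seq. rewrite T_e0. unfold u. pose proof (nsq_ge0 (phi i)) as Hu.
    assert (HDK1 : INR D / INR K <= 1) by (apply (Rmult_le_reg_r (INR K)); [lra|]; field_simplify; lra).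
    assert (HDK0 : 0 <= INR D / INR K) by (apply Rdiv_le_0_compat; [apply pos_INR | lra]).
    destruct (Nat.ltb_spec i K).
    - unfold cK. replace (Cminus (Cmult (RtoC (INR (K - i) / INR K)) (phi i)) (phi i))
        with (Cmult (RtoC (- (INR i / INR K))) (phi i)).
      2: { rewrite minus_INR by lia. rewrite RtoC_opp. 
           replace (RtoC ((INR K - INR i) / INR K)) with (RtoC (1 - INR i / INR K)) by (f_equal; field; lra).
           rewrite RtoC_minus. ring. }
      rewrite nsq_mult, nsq_RtoC.
      assert (Hi0 : 0 <= INR i / INR K) by (apply Rdiv_le_0_compat; [apply pos_INR | lra]).
      assert (Hi1 : INR i / INR K <= 1).
      { apply (Rmult_le_reg_r (INR K)). lra. field_simplify. 2: lra. apply le_INR. lia. }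
      destruct (Nat.ltb_spec i D).
      + assert (INR i / INR K <= INR D / INR K).
        { apply Rmult_le_compat_r. left; apply Rinv_0_lt_compat; lra. apply le_INR; lia. }
        assert (- (INR i / INR K) * - (INR i / INR K) <= INR D / INR K) by nra.
        assert (- (INR i / INR K) * - (INR i / INR K) * nsq (phi i) <= INR D / INR K * nsq (phi i))
          by (apply Rmult_le_compat_r; lra). lra.
      + assert (- (INR i / INR K) * - (INR i / INR K) <= 1) by nra.
        assert (- (INR i / INR K) * - (INR i / INR K) * nsq (phi i) <= 1 * nsq (phi i))
          by (apply Rmult_le_compat_r; lra).
        assert (0 <= INR D / INR K * nsq (phi i)) by (apply Rmult_le_pos; lra). lra.
    - destruct (Nat.ltb_spec i D). lia.
      replace (Cminus (RtoC 0) (phi i)) with (Cmult (RtoC (-1)) (phi i)) by ring.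
      rewrite nsq_mult, nsq_RtoC.
      assert (0 <= INR D / INR K * nsq (phi i)) by (apply Rmult_le_pos; lra). lra. }
  assert (Hb : l2 (sub_seq (T K e0) phi) /\ nrm2 (sub_seq (T K e0) phi) <= eps).
  { apply nrm2_bound. intro M.
    apply (Rle_trans _ (rsum (fun i => INR D / INR K * u i + (if (i <? D)%nat then 0 else u i)) M)).
    apply rsum_le; intros; apply Hpt.
    rewrite rsum_plus, rsum_scal. pose proof (tail_rsum phi D M l2_phi). pose proof (l2_partial phi M l2_phi).
    fold u in H, H0. assert (INR D / INR K * rsum u M <= INR D / INR K * nrm2 phi).
    { apply Rmult_le_compat_l. apply Rdiv_le_0_compat; [apply pos_INR|lra]. exact H0. }
    unfold u in *. lra. }
  apply Hb.
Qed.


Lemma TL K h : (0 < K)%nat -> l2 h -> l2 (T K h) /\ nrm2 (T K h) <= CY * nrm2 h.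
Proof. exact (T_l2 Y CY HCY HYl2 HYadd HYscal HYbnd HYsh K h). Qed.
Lemma YShp d x : l2 x -> Y (Shp d x) = Shp d (Y x).
Proof. eapply Y_Shp; eauto. Qed.
Lemma Yzero : Y zero_seq = zero_seq.
Proof. eapply Y_zero; eauto. Qed.

Lemma mid_lim h N eps : 0 < eps -> exists K0, (0 < K0)%nat /\ forall K, (K0 <= K)%nat ->
  nrm2 (sub_seq (T K (Pt N h)) (Y (Pt N h))) <= eps.
Proof. revert eps. induction N; intros eps He.
  - exists 1%nat. split. lia. intros K HK.
    replace (Pt 0 h) with zero_seq by (apply functional_extensionality; intro; reflexivity).
    rewrite T_zero, Yzero. replace (sub_seq zero_seq zero_seq) with zero_seq.
    rewrite (proj2 l2_zero). lra. apply functional_extensionality; intro; unfold sub_seq, zero_seq; ring.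
  - destruct (IHN (eps / 4) ltac:(lra)) as [K1 [HK1 H1]].
    assert (Hh : 0 < nsq (h N) + 1) by (pose proof (nsq_ge0 (h N)); lra).
    destruct (rho_lim (eps / (4 * (nsq (h N) + 1))) ltac:(apply Rdiv_lt_0_compat; lra)) as [K2 [HK2 H2]].
    exists (Nat.max K1 K2). split. lia. intros K HK.
    specialize (H1 K ltac:(lia)). specialize (H2 K ltac:(lia)).
    assert (HKp : (0 < K)%nat) by lia.
    assert (He0 : l2 (Shp N e0)) by apply Shp_l2, l2_e0.
    assert (E : sub_seq (T K (Pt (S N) h)) (Y (Pt (S N) h)) =
      add_seq (sub_seq (T K (Pt N h)) (Y (Pt N h))) (scal_seq (h N) (Shp N (sub_seq (T K e0) phi)))).
    { rewrite Pt_S, T_add, T_scal, T_Shp, HYadd, HYscal, YShp; auto. 2: apply l2_e0.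
      2: apply l2_Pt. 2: apply l2_scal, He0.
      apply functional_extensionality; intro i. unfold sub_seq, add_seq, scal_seq, Shp.
      destruct (N <=? i)%nat; unfold phi; ring. }
    rewrite E.
    assert (Hl1 : l2 (sub_seq (T K (Pt N h)) (Y (Pt N h)))).
    { apply l2_sub. apply TL; auto. apply l2_Pt. apply HYl2, l2_Pt. }
    assert (Hl2 : l2 (sub_seq (T K e0) phi)).
    { apply l2_sub. apply TL; auto. apply l2_e0. apply l2_phi. }
    destruct (Shp_l2 N _ Hl2) as [Hl3 H3].
    destruct (l2_scal (h N) _ Hl3) as [Hl4 H4].
    destruct (l2_add _ _ Hl1 Hl4) as [_ H5].
    assert (nsq (h N) * nrm2 (sub_seq (T K e0) phi) <= eps / 4).
    { apply (Rle_trans _ ((nsq (h N) + 1) * (eps / (4 * (nsq (h N) + 1))))).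
      apply Rmult_le_compat. apply nsq_ge0. apply nrm2_ge0, Hl2. lra. exact H2.
      right. field. lra. }
    assert (nsq (h N) * nrm2 (Shp N (sub_seq (T K e0) phi)) <= nsq (h N) * nrm2 (sub_seq (T K e0) phi)).
    { apply Rmult_le_compat_l. apply nsq_ge0. exact H3. }
    lra.
Qed.

Lemma conv_lim h eps : l2 h -> 0 < eps -> exists K0, (0 < K0)%nat /\ forall K, (K0 <= K)%nat ->
  nrm2 (sub_seq (T K h) (Y h)) <= eps.
Proof. intros Hh He.
  set (delta := eps / (12 * (CY + 1))).
  assert (Hd : 0 < delta) by (unfold delta; apply Rdiv_lt_0_compat; lra).
  destruct (ser_tail (fun i => nsq (h i)) delta Hh Hd) as [N HN]. specialize (HN N (Nat.le_refl _)).
  assert (HN' : nrm2 h - rsum (fun i => nsq (h i)) N <= delta) by exact HN.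
  assert (Ht1 : l2 (sub_seq h (Pt N h)) /\ nrm2 (sub_seq h (Pt N h)) <= delta).
  { apply nrm2_bound. intro M. rewrite (rsum_ext _ (fun i => if (i <? N)%nat then 0 else nsq (h i))).
    pose proof (tail_rsum h N M Hh). lra.
    intros i _. unfold sub_seq, Pt. destruct (i <? N)%nat. replace (Cminus (h i) (h i)) with (RtoC 0) by ring.
    apply nsq_0. replace (Cminus (h i) (RtoC 0)) with (h i) by ring. reflexivity. }
  assert (Ht2 : l2 (sub_seq (Pt N h) h) /\ nrm2 (sub_seq (Pt N h) h) <= delta).
  { apply nrm2_bound. intro M. rewrite (rsum_ext _ (fun i => if (i <? N)%nat then 0 else nsq (h i))).
    pose proof (tail_rsum h N M Hh). lra.
    intros i _. unfold sub_seq, Pt. destruct (i <? N)%nat. replace (Cminus (h i) (h i)) with (RtoC 0) by ring.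
    apply nsq_0. replace (Cminus (RtoC 0) (h i)) with (Cmult (RtoC (-1)) (h i)) by ring.
    rewrite nsq_mult, nsq_RtoC. ring. }
  destruct Ht1 as [Hl1 Hb1], Ht2 as [Hl2 Hb2].
  destruct (mid_lim h N (eps / 8) ltac:(lra)) as [K0 [HK0 HM]].
  exists K0. split. exact HK0. intros K HK. specialize (HM K HK).
  assert (HKp : (0 < K)%nat) by lia.
  assert (E : sub_seq (T K h) (Y h) =
     add_seq (T K (sub_seq h (Pt N h))) (add_seq (sub_seq (T K (Pt N h)) (Y (Pt N h))) (Y (sub_seq (Pt N h) h)))).
  { rewrite T_sub, Y_sub; auto. 2: apply l2_Pt.
    apply functional_extensionality; intro i. unfold sub_seq, add_seq. ring. }
  rewrite E.
  destruct (TL K _ HKp Hl1) as [HA HAb].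
  assert (HB : l2 (sub_seq (T K (Pt N h)) (Y (Pt N h)))).
  { apply l2_sub. apply TL; auto. apply l2_Pt. apply HYl2, l2_Pt. }
  assert (HC := HYl2 _ Hl2). pose proof (HYbnd _ Hl2) as HCb.
  destruct (l2_add _ _ HB HC) as [HBC HBCb].
  destruct (l2_add _ _ HA HBC) as [_ Htot].
  assert (CY * nrm2 (sub_seq h (Pt N h)) <= CY * delta) by (apply Rmult_le_compat_l; lra).
  assert (CY * nrm2 (sub_seq (Pt N h) h) <= CY * delta) by (apply Rmult_le_compat_l; lra).
  assert (6 * (CY * delta) <= eps / 2).
  { unfold delta. apply (Rmult_le_reg_r (12 * (CY + 1))). lra. 
    replace (6 * (CY * (eps / (12 * (CY + 1)))) * (12 * (CY + 1))) with (6 * CY * eps) by (field; lra). nra. }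
  lra.
Qed.

End Abs2.
Lemma iterS_char n b Sop (Hb : forall t, (n <= t)%nat -> b t = RtoC 0) (HS : is_n_shift b Sop) h : l2 h ->
  forall d, Viop b (Shp d (Vop b h)) = Nat.iter d Sop h /\ l2 (Nat.iter d Sop h).
Proof. intros Hh d. induction d.
  - simpl. rewrite Shp_0, Vi_V. auto.
  - destruct IHd as [E L]. simpl (Nat.iter (Datatypes.S d) Sop h).
    destruct (S_char n b Sop Hb HS _ L) as [E2 L2].
    rewrite Shp_S. split; [|exact L2]. rewrite E2. rewrite <- E. rewrite V_Vi. reflexivity.
Qed.

Lemma M_csum (M : seqC -> Prop) (HM : closed_subspace M) (F : nat -> seqC) K :
  (forall d, (d < K)%nat -> M (F d)) -> M (fun i => csum (fun d => F d i) K).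
Proof. destruct HM as [_ [HM0 [HMadd _]]]. induction K; intro H.
  - exact HM0.
  - change (M (add_seq (fun i => csum (fun d => F d i) K) (F K))). apply HMadd.
    apply IHK. intros; apply H; lia. apply H; lia. Qed.

Lemma Vi_csum b (F : nat -> seqC) K :
  Viop b (fun i => csum (fun d => F d i) K) = fun i => csum (fun d => Viop b (F d) i) K.
Proof. induction K.
  - exact (Vi_zero b).
  - change (Viop b (add_seq (fun i => csum (fun d => F d i) K) (F K)) =
            add_seq (fun i => csum (fun d => Viop b (F d) i) K) (Viop b (F K))).
    rewrite Vi_add, IHK. reflexivity. Qed.

Theorem theorem5p1 (n : nat) (b : nat -> C) (S : seqC -> seqC)
  (Hn : (1 <= n)%nat)
  (Hb : forall t, (n <= t)%nat -> b t = RtoC 0)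
  (HS : is_n_shift b S)
  (M : seqC -> Prop) (HM : closed_subspace M) (HMS : invariant S M) :
  forall X : seqC -> seqC, bounded_operator X ->
    (forall a, in_l2 a -> X (S a) = S (X a)) ->
    invariant X M.
Proof.
  intros X [HXl2 [HXadd [HXscal [KX HKX]]]] HXS h HMh.
  pose proof HM as HM'.
  destruct HM' as [HMl2 [HM0 [HMadd [HMscal HMcl]]]].
  assert (Xl2 : forall a, l2 a -> l2 (X a)) by (intros a Ha; apply in_l2_iff, HXl2, in_l2_iff, Ha).
  assert (Xadd : forall a c, l2 a -> l2 c -> X (add_seq a c) = add_seq (X a) (X c))
    by (intros a c Ha Hc; apply HXadd; apply in_l2_iff; auto).
  assert (Xscal : forall l a, l2 a -> X (scal_seq l a) = scal_seq l (X a))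
    by (intros l a Ha; apply HXscal; apply in_l2_iff; auto).
  set (KX' := Rmax KX 0).
  assert (Xbnd : forall a, l2 a -> nrm2 (X a) <= KX' * nrm2 a).
  { intros a Ha. rewrite <- !sq_norm_eq. apply (Rle_trans _ _ _ (HKX a (proj2 (in_l2_iff a) Ha))).
    apply Rmult_le_compat_r. rewrite sq_norm_eq; apply nrm2_ge0, Ha. apply Rmax_l. }
  assert (XS : forall a, l2 a -> X (S a) = S (X a)) by (intros; apply HXS, in_l2_iff; auto).
  set (Y := fun a => Vop b (X (Viop b a))).
  set (CY := KV n b * KX' * KVi n b).
  assert (HKX' : 0 <= KX') by apply Rmax_r.
  assert (HCY : 0 <= CY).
  { unfold CY. pose proof (KV_ge0 n b). pose proof (KVi_ge0 n b). apply Rmult_le_pos. apply Rmult_le_pos; auto. auto. }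
  assert (HYl2 : forall a, l2 a -> l2 (Y a)).
  { intros a Ha. apply (V_l2 n b Hb), Xl2, (Vi_l2 n b Hb), Ha. }
  assert (HYadd : forall a c, l2 a -> l2 c -> Y (add_seq a c) = add_seq (Y a) (Y c)).
  { intros a c Ha Hc. unfold Y. rewrite Vi_add, Xadd, V_add. reflexivity.
    apply (Vi_l2 n b Hb), Ha. apply (Vi_l2 n b Hb), Hc. }
  assert (HYscal : forall l a, l2 a -> Y (scal_seq l a) = scal_seq l (Y a)).
  { intros l a Ha. unfold Y. rewrite Vi_scal, Xscal, V_scal. reflexivity. apply (Vi_l2 n b Hb), Ha. }
  assert (HYbnd : forall a, l2 a -> nrm2 (Y a) <= CY * nrm2 a).
  { intros a Ha. unfold Y, CY. destruct (Vi_l2 n b Hb a Ha) as [L1 B1].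
    pose proof (Xbnd _ L1) as B2. destruct (V_l2 n b Hb _ (Xl2 _ L1)) as [_ B3].
    pose proof (KV_ge0 n b). pose proof (KVi_ge0 n b).
    apply (Rle_trans _ _ _ B3). apply (Rle_trans _ (KV n b * (KX' * nrm2 (Viop b a)))).
    apply Rmult_le_compat_l; auto.
    apply (Rle_trans _ (KV n b * (KX' * (KVi n b * nrm2 a)))).
    apply Rmult_le_compat_l; auto. apply Rmult_le_compat_l; auto. right; ring. }
  assert (HYsh : forall a, l2 a -> Y (Sh a) = Sh (Y a)).
  { intros a Ha. unfold Y. destruct (Vi_l2 n b Hb a Ha) as [L1 _].
    destruct (S_char n b S Hb HS _ L1) as [E1 _]. rewrite V_Vi in E1. rewrite <- E1.
    rewrite XS by exact L1. destruct (S_char n b S Hb HS _ (Xl2 _ L1)) as [E2 _]. rewrite E2.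
    rewrite V_Vi. reflexivity. }
  assert (Hh : l2 h) by (apply in_l2_iff, HMl2, HMh).
  set (hh := Vop b h).
  assert (Hhh : l2 hh) by (apply (V_l2 n b Hb), Hh).
  set (u := fun k => Viop b (T Y (Datatypes.S k) hh)).
  assert (Miter : forall d, M (Nat.iter d S h)).
  { induction d. exact HMh. simpl. apply HMS, IHd. }
  assert (Mu : forall k, M (u k)).
  { intro k. unfold u, T. rewrite Vi_csum. apply M_csum. exact HM. intros d Hd.
    change (M (Viop b (scal_seq (cK Y (Datatypes.S k) d) (Shp d hh)))). rewrite Vi_scal.
    apply HMscal. unfold hh. rewrite (proj1 (iterS_char n b S Hb HS h Hh d)). apply Miter. }
  assert (Xh : X h = Viop b (Y hh)).
  { unfold Y, hh. rewrite !Vi_V. reflexivity. }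
  apply (HMcl u). exact Mu. apply HXl2, HMl2, HMh.
  apply is_lim_seq_spec. intro eps.
  assert (Hk0 : 0 < KVi n b + 1) by (pose proof (KVi_ge0 n b); lra).
  destruct (conv_lim Y CY HCY HYl2 HYadd HYscal HYbnd HYsh hh (eps / (2 * (KVi n b + 1))) Hhh)
    as [K0 [HK0 HK]].
  { apply Rdiv_lt_0_compat. apply cond_pos. lra. }
  exists K0. intros k Hk. specialize (HK (Datatypes.S k) ltac:(lia)).
  rewrite sq_norm_eq. unfold u. rewrite Xh, <- Vi_sub.
  assert (Hl : l2 (sub_seq (T Y (Datatypes.S k) hh) (Y hh))).
  { apply l2_sub. apply (TL Y CY HCY HYl2 HYadd HYscal HYbnd HYsh). lia. exact Hhh. apply HYl2, Hhh. }
  destruct (Vi_l2 n b Hb _ Hl) as [Hl' Hb'].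
  pose proof (nrm2_ge0 _ Hl'). pose proof (nrm2_ge0 _ Hl). pose proof (KVi_ge0 n b).
  rewrite Rminus_0_r, Rabs_pos_eq by exact H.
  assert (KVi n b * nrm2 (sub_seq (T Y (Datatypes.S k) hh) (Y hh)) <= KVi n b * (eps / (2 * (KVi n b + 1)))).
  { apply Rmult_le_compat_l; auto. }
  assert (KVi n b * (eps / (2 * (KVi n b + 1))) < eps).
  { pose proof (cond_pos eps). apply (Rmult_lt_reg_r (2 * (KVi n b + 1))). lra.
    replace (KVi n b * (eps / (2 * (KVi n b + 1))) * (2 * (KVi n b + 1))) with (KVi n b * eps) by (field; lra).
    nra. }
  lra.
Qed.
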